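(* Let $A_o,A_i\in\mathbb R^{n_y\times n_x}$, let $B_o,B_i\in\mathbb R^{n_y\times n_y}$ and $C_o,C_i\in\mathbb R^{n_x\times n_x}$ be invertible, and let $W_o=(\det(B_oB_o^T))^{1/(2n_y)}\|C_o\|_{\mathrm F}$ and $W_i=(\det(B_iB_i^T))^{1/(2n_y)}\|C_i\|_{\mathrm F}$ be the generalized cone widths of the inclusions $y\in\{(A_o+B_o\Delta C_o)x:\|\Delta\|\le1\}$ and $y\in\{(A_i+B_i\Delta C_i)x:\|\Delta\|\le1\}$. If the first (outer) inclusion contains the second (inner) inclusion, then $W_o\ge W_i$.
   Context: $\|\cdot\|$ is the spectral norm, $\|\cdot\|_{\mathrm F}$ the Frobenius norm. An inclusion contains another if every pair $(x,y)\in\mathbb C^{n_x}\times\mathbb C^{n_y}$ satisfying the second also satisfies the first. The generalized cone width formula equals $\sqrt{\mathrm E(R^2(x))}$ with $x$ standard complex normal and $R(x)=\sqrt{x^*C^TCx}\,(\det(BB^T))^{1/(2n_y)}$. *)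

(* Defs.v *)
From HB Require Import structures.
From mathcomp Require Import all_boot all_order all_algebra.
From mathcomp Require Import complex.
From mathcomp Require Import reals exp.
Set Implicit Arguments. Unset Strict Implicit. Unset Printing Implicit Defensive.
Import Order.TTheory GRing.Theory Num.Theory.
Local Open Scope ring_scope.

Section Defs.
Variable R : realType.

Definition cmx (m n : nat) (A : 'M[R]_(m, n)) : 'M[R[i]]_(m, n) :=
  map_mx (fun r : R => Complex r 0) A.

Definition cnorm2 (n : nat) (v : 'cV[R[i]]_n) : R[i] :=
  \sum_(k < n) `|v k 0| ^+ 2.

(* spectral (operator 2-)norm of Delta is at most 1:
   ||Delta v||_2 <= ||v||_2 for every complex vector v *)
Definition spec_le1 (m n : nat) (D : 'M[R[i]]_(m, n)) : Prop :=
  forall v : 'cV[R[i]]_n, cnorm2 (D *m v) <= cnorm2 v.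

Definition inclusion (nx ny : nat) (A : 'M[R]_(ny, nx)) (B : 'M[R]_ny)
    (C : 'M[R]_nx) (x : 'cV[R[i]]_nx) (y : 'cV[R[i]]_ny) : Prop :=
  exists D : 'M[R[i]]_(ny, nx),
    spec_le1 D /\ y = (cmx A + cmx B *m D *m cmx C) *m x.

Definition contains (nx ny : nat)
    (I1 I2 : 'cV[R[i]]_nx -> 'cV[R[i]]_ny -> Prop) : Prop :=
  forall x y, I2 x y -> I1 x y.

Definition frob (m n : nat) (M : 'M[R]_(m, n)) : R :=
  Num.sqrt (\sum_(i < m) \sum_(j < n) M i j ^+ 2).

Definition cone_width (nx ny : nat) (B : 'M[R]_ny) (C : 'M[R]_nx) : R :=
  powR (\det (B *m B^T)) (1 / (2 * ny%:R)) * frob C.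

End Defs.

(* Main.v *)
Require Import Defs.
From HB Require Import structures.
From mathcomp Require Import all_boot all_order all_algebra.
From mathcomp Require Import complex.
From mathcomp Require Import reals exp.
From mathcomp Require Import ring lra.
Import Order.TTheory GRing.Theory Num.Theory.
Local Open Scope ring_scope.
Local Open Scope complex_scope.

Lemma prod_seqN (F : comNzRingType) (r : seq F) :
  \prod_(z <- r) (- z) = (-1) ^+ size r * \prod_(z <- r) z.
Proof.
rewrite (big_nth 0) big_mkord prodrN card_ord.
by rewrite [in RHS](big_nth 0) big_mkord.
Qed.

Lemma det_bound (F : closedFieldType) (n : nat) (M : 'M[F]_n) (P : F -> Prop) :
  (forall v : 'cV_n, v != 0 -> forall a, M *m v = a *: v -> P a) ->
  exists r : seq F, [/\ size r = n, \det M = \prod_(z <- r) z & forall z, z \in r -> P z].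
Proof.
move=> HP.
have [r Hr] := closed_field_poly_normal (char_poly M^T).
have mon := char_poly_monic M^T.
rewrite (monicP mon) scale1r in Hr.
exists r.
have Hs : size r = n.
  have := size_char_poly M^T; rewrite Hr size_prod_XsubC; by case.
split => //.
- have := char_poly_det M^T; rewrite det_tr -horner_coef0 Hr horner_prod.
  under eq_bigr do rewrite hornerXsubC add0r.
  rewrite prod_seqN Hs => H; symmetry; apply: (mulfI _ H); by rewrite signr_eq0.
- move=> z zr.
  have : root (char_poly M^T) z by rewrite Hr root_prod_XsubC.
  rewrite -eigenvalue_root_char => /eigenvalueP [v Hv vn0].
  apply: (HP v^T); first by rewrite trmx_eq0.
  by rewrite -[M]trmxK -trmx_mul Hv linearZ.
Qed.

Lemma lagrange (F : comPzRingType) (n : nat) (x y : 'I_n -> F) :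
  \sum_k \sum_l (x k * y l - x l * y k) ^+ 2 =
  ((\sum_k x k ^+ 2) * (\sum_k y k ^+ 2) - (\sum_k x k * y k) ^+ 2) *+ 2.
Proof.
have E1 : \sum_k \sum_l (x k * y l) ^+ 2 = (\sum_k x k ^+ 2) * (\sum_k y k ^+ 2).
  rewrite mulr_suml; apply: eq_bigr => k _; rewrite mulr_sumr.
  by apply: eq_bigr => l _; rewrite exprMn.
have E2 : \sum_k \sum_l (x l * y k) ^+ 2 = (\sum_k x k ^+ 2) * (\sum_k y k ^+ 2).
  by rewrite exchange_big.
have E3 : \sum_k \sum_l (x k * y l) * (x l * y k) = (\sum_k x k * y k) ^+ 2.
  rewrite expr2 mulr_suml; apply: eq_bigr => k _; rewrite mulr_sumr.
  apply: eq_bigr => l _; by rewrite mulrACA [in RHS]mulrACA [y l * _]mulrC.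
transitivity (\sum_k \sum_l ((x k * y l) ^+ 2 + (x l * y k) ^+ 2 - ((x k * y l) * (x l * y k)) *+ 2)).
  by apply: eq_bigr => k _; apply: eq_bigr => l _; rewrite sqrrB addrAC.
under eq_bigr do rewrite sumrB big_split /= sumrMnl.
rewrite sumrB big_split /= sumrMnl E1 E2 E3.
by rewrite [RHS]mulr2n opprD addrACA.
Qed.

Lemma cs_real (F : numDomainType) (n : nat) (x y : 'I_n -> F) :
  (forall k, x k \is Num.real) -> (forall k, y k \is Num.real) ->
  (\sum_k x k * y k) ^+ 2 <= (\sum_k x k ^+ 2) * (\sum_k y k ^+ 2).
Proof.
move=> hx hy.
have : 0 <= \sum_k \sum_l (x k * y l - x l * y k) ^+ 2.
  apply: sumr_ge0 => k _; apply: sumr_ge0 => l _.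
  by rewrite -realEsqr realB // realM.
by rewrite lagrange pmulrn_lge0 // subr_ge0.
Qed.

Lemma zmod_aux (V : zmodType) (a c X : V) : (-a + (c + X)) - (-a + (c - X)) = X *+ 2.
Proof. by rewrite opprD opprK addrACA addNr add0r opprB addrA addrC !addrA addNr add0r mulr2n. Qed.

Lemma prod_const_seq (F : comNzRingType) (T : Type) (r : seq T) (c : F) :
  \prod_(z <- r) c = c ^+ size r.
Proof.
by elim: r => [|z r IH]; rewrite ?big_nil ?expr0 // big_cons IH exprS.
Qed.

Section C.
Variable R : realType.
Local Notation C := R[i].

Lemma normC_real (r : R) : `|r%:C| = `|r|%:C :> C.
Proof. by rewrite normc_def /= expr0n /= addr0 sqrtr_sqr. Qed.

Lemma sqr_normC_real (r : R) : `|r%:C| ^+ 2 = (r ^+ 2)%:C :> C.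
Proof. by rewrite normC_real -rmorphXn /= real_normK ?num_real. Qed.

Lemma cnorm2_ge0 n (v : 'cV[C]_n) : 0 <= cnorm2 v.
Proof. by apply: sumr_ge0 => k _; rewrite exprn_ge0. Qed.

Lemma cnorm2_gt0 n (v : 'cV[C]_n) : v != 0 -> 0 < cnorm2 v.
Proof.
move=> vn0; rewrite lt_def cnorm2_ge0 andbT; apply: contra vn0 => /eqP H.
apply/eqP/matrixP => k l; rewrite (ord1 l) mxE.
have := H; rewrite /cnorm2 => /eqP; rewrite psumr_eq0 => [/allP Hall|].
  have := Hall k (mem_index_enum k); rewrite /= expf_eq0 /= normr_eq0 => /eqP //.
by move=> i _; rewrite exprn_ge0.
Qed.

Lemma cnorm2Z n (c : C) (v : 'cV[C]_n) : cnorm2 (c *: v) = `|c| ^+ 2 * cnorm2 v.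
Proof.
rewrite /cnorm2 mulr_sumr; apply: eq_bigr => k _.
by rewrite mxE normrM exprMn.
Qed.

Lemma sqrD_le (F : numDomainType) (p q : F) : p \is Num.real -> q \is Num.real ->
  (p + q) ^+ 2 <= (p ^+ 2 + q ^+ 2) *+ 2.
Proof.
move=> hp hq; rewrite -subr_ge0.
have -> : (p ^+ 2 + q ^+ 2) *+ 2 - (p + q) ^+ 2 = (p - q) ^+ 2 by ring.
by rewrite -realEsqr realB.
Qed.

Lemma cnorm2B n (v w : 'cV[C]_n) : cnorm2 (v - w) <= (cnorm2 v + cnorm2 w) *+ 2.
Proof.
rewrite /cnorm2 -big_split /= -sumrMnl; apply: ler_sum => k _.
rewrite !mxE.
apply: (@le_trans _ _ ((`|v k 0| + `|w k 0|) ^+ 2)).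
  rewrite ler_pXn2r ?nnegrE ?addr_ge0 //; exact: ler_normB.
exact: sqrD_le (normr_real _) (normr_real _).
Qed.

Lemma cs_norm (F : numDomainType) (n : nat) (a b : 'I_n -> F) :
  `|\sum_k a k * b k| ^+ 2 <= (\sum_k `|a k| ^+ 2) * (\sum_k `|b k| ^+ 2).
Proof.
apply: (@le_trans _ _ ((\sum_k `|a k| * `|b k|) ^+ 2)).
  rewrite ler_pXn2r ?nnegrE ?sumr_ge0 // => [|k _]; last by rewrite mulr_ge0.
  apply: le_trans (ler_norm_sum _ _ _) _.
  by apply: ler_sum => k _; rewrite normrM.
by apply: cs_real => k; apply: normr_real.
Qed.

Lemma cmxE m n (A : 'M[R]_(m, n)) i j : cmx A i j = (A i j)%:C.
Proof. by rewrite /cmx mxE. Qed.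

Lemma rank1 m n (w : 'cV[R]_m) (u : 'cV[C]_n) (rho : R) :
  0 < rho -> \sum_k w k 0 ^+ 2 = rho ^+ 2 -> cnorm2 u <= 1 ->
  spec_le1 (\matrix_(k, l) (u k 0 * (w l 0 / rho)%:C)) /\
  (\matrix_(k, l) (u k 0 * (w l 0 / rho)%:C)) *m cmx w = rho%:C *: u.
Proof.
move=> rho0 Hw Hu; set D := \matrix_(k, l) _.
split.
- move=> v.
  have -> : D *m v = (\sum_l (w l 0 / rho)%:C * v l 0) *: u.
    apply/matrixP => k l; rewrite (ord1 l) !mxE mulr_suml; apply: eq_bigr => i _.
    by rewrite [RHS]mulrC mulrA mxE.
  rewrite cnorm2Z.
  apply: (@le_trans _ _ (`|\sum_l (w l 0 / rho)%:C * v l 0| ^+ 2)).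
    by rewrite ler_piMr ?exprn_ge0.
  apply: le_trans (cs_norm _ _ (fun l => (w l 0 / rho)%:C) (fun l => v l 0)) _.
  have -> : \sum_k `|(w k 0 / rho)%:C| ^+ 2 = 1 :> C.
    under eq_bigr do rewrite sqr_normC_real.
    rewrite -rmorph_sum /=.
    under eq_bigr do rewrite expr_div_n.
    by rewrite -mulr_suml Hw divff // expf_neq0 // gt_eqF.
  by rewrite mul1r.
- apply/matrixP => k l; rewrite (ord1 l) !mxE.
  under eq_bigr do rewrite !mxE complexr0 -mulrA -rmorphM /=.
  rewrite -mulr_sumr -rmorph_sum /=.
  under eq_bigr do rewrite mulrAC -expr2.
  by rewrite -mulr_suml Hw expr2 mulrK ?unitfE ?gt_eqF // mulrC.
Qed.

Lemma cmxM m n p (A : 'M[R]_(m, n)) (B : 'M[R]_(n, p)) : cmx (A *m B) = cmx A *m cmx B.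
Proof. exact: (map_mxM (real_complex R)). Qed.

Lemma cmx_det n (A : 'M[R]_n) : \det (cmx A) = (\det A)%:C.
Proof. exact: (det_map_mx (real_complex R)). Qed.

Lemma cnorm2_cmx n (w : 'cV[R]_n) : cnorm2 (cmx w) = (\sum_k w k 0 ^+ 2)%:C.
Proof.
rewrite /cnorm2 rmorph_sum; apply: eq_bigr => k _.
by rewrite cmxE sqr_normC_real.
Qed.

Lemma cnorm2N n (v : 'cV[C]_n) : cnorm2 (- v) = cnorm2 v.
Proof. by rewrite -scaleN1r cnorm2Z normrN1 expr1n mul1r. Qed.

Lemma stepB nx ny (Ao Ai : 'M[R]_(ny, nx)) (Bo Bi : 'M[R]_ny) (Co Ci : 'M[R]_nx)
    (x : 'cV[R]_nx) (ri ro : R) :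
  cmx Bo \in unitmx -> contains (inclusion Ao Bo Co) (inclusion Ai Bi Ci) ->
  0 < ri -> \sum_k (Ci *m x) k 0 ^+ 2 = ri ^+ 2 ->
  \sum_k (Co *m x) k 0 ^+ 2 = ro ^+ 2 ->
  forall u : 'cV[C]_ny, cnorm2 u <= 1 ->
  cnorm2 (ri%:C *: ((invmx (cmx Bo) *m cmx Bi) *m u)) <= (ro ^+ 2)%:C.
Proof.
move=> uBo Hcont ri0 Hi Ho.
have stepA : forall u : 'cV[C]_ny, cnorm2 u <= 1 -> exists z, cnorm2 z <= (ro ^+ 2)%:C /\
    cmx Ai *m cmx x + cmx Bi *m (ri%:C *: u) = cmx Ao *m cmx x + cmx Bo *m z.
  move=> u Hu.
  have [Hs HD] := rank1 _ _ _ _ _ ri0 Hi Hu.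
  set D := \matrix_(k, l) _ in Hs HD.
  have := Hcont (cmx x) ((cmx Ai + cmx Bi *m D *m cmx Ci) *m cmx x) (ex_intro _ D (conj Hs erefl)).
  case=> Do [HDo Heq].
  exists (Do *m (cmx Co *m cmx x)); split.
    by apply: le_trans (HDo _) _; rewrite -cmxM cnorm2_cmx Ho.
  move: Heq; rewrite !mulmxDl -!mulmxA -!cmxM HD => ->.
  done.
move=> u Hu.
have [z1 [Hz1 E1]] := stepA u Hu.
have Hu' : cnorm2 (- u) <= 1 by rewrite cnorm2N.
have [z2 [Hz2 E2]] := stepA (- u) Hu'.
set X := cmx Bi *m (ri%:C *: u).
have E2' : cmx Ai *m cmx x - X = cmx Ao *m cmx x + cmx Bo *m z2.
  by rewrite -E2 /X scalerN mulmxN.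
have HX : X *+ 2 = cmx Bo *m (z1 - z2).
  rewrite mulmxBr -[cmx Bo *m z1](addKr (cmx Ao *m cmx x)) -[cmx Bo *m z2](addKr (cmx Ao *m cmx x)).
  rewrite -E1 -E2'. 
  by rewrite zmod_aux.
have HM : ri%:C *: ((invmx (cmx Bo) *m cmx Bi) *m u) = (2%:R : C)^-1 *: (z1 - z2).
  rewrite scalemxAr -mulmxA -/X.
  have -> : X = cmx Bo *m ((2%:R : C)^-1 *: (z1 - z2)).
    rewrite -scalemxAr -HX -[X *+ 2](scaler_nat (R:=C)) scalerA mulVf ?scale1r //.
    by rewrite pnatr_eq0.
  by rewrite mulKmx.
rewrite HM cnorm2Z.
apply: (@le_trans _ _ (`|(2%:R : C)^-1| ^+ 2 * ((cnorm2 z1 + cnorm2 z2) *+ 2))).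
  by rewrite ler_wpM2l ?exprn_ge0 // cnorm2B.
apply: (@le_trans _ _ (`|(2%:R : C)^-1| ^+ 2 * (((ro ^+ 2)%:C + (ro ^+ 2)%:C) *+ 2))).
  by rewrite ler_wpM2l ?exprn_ge0 // lerMn2r /= lerD.
rewrite -mulr2n -mulrnA normfV ger0_norm ?ler0n // -mulr_natr.
rewrite le_eqVlt; apply/orP; left; apply/eqP.
by rewrite -mulr_natr mul1r; field.
Qed.
Lemma stepCD nx ny (Ao Ai : 'M[R]_(ny, nx)) (Bo Bi : 'M[R]_ny) (Co Ci : 'M[R]_nx)
    (x : 'cV[R]_nx) (ri ro : R) :
  Bo \in unitmx -> contains (inclusion Ao Bo Co) (inclusion Ai Bi Ci) ->
  0 < ri -> \sum_k (Ci *m x) k 0 ^+ 2 = ri ^+ 2 ->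
  0 <= ro -> \sum_k (Co *m x) k 0 ^+ 2 = ro ^+ 2 ->
  ri ^+ ny * `|\det Bi| <= ro ^+ ny * `|\det Bo|.
Proof.
move=> uBo Hcont ri0 Hi ro0 Ho.
have dBo0 : \det Bo != 0 by rewrite -unitfE -unitmxE.
have uBoC : cmx Bo \in unitmx by rewrite unitmxE cmx_det unitfE fmorph_eq0.
have HB := stepB _ _ _ _ _ _ _ _ _ ri ro uBoC Hcont ri0 Hi Ho.
set M := invmx (cmx Bo) *m cmx Bi in HB.
have HC : forall v : 'cV_ny, v != 0 -> forall a, M *m v = a *: v -> `|ri%:C * a| <= ro%:C.
  move=> v vn0 a Hv.
  set c := cnorm2 v.
  have c0 : 0 < c := cnorm2_gt0 _ _ vn0.
  set s := sqrtc c^-1.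
  have s0 : 0 <= s by rewrite sqrtc_ge0 invr_ge0 ltW.
  have s2 : s ^+ 2 = c^-1 by rewrite sqr_sqrtc.
  have Hu : cnorm2 (s *: v) <= 1 by rewrite cnorm2Z ger0_norm // s2 mulVf // gt_eqF.
  have := HB _ Hu.
  rewrite -scalemxAr Hv !scalerA cnorm2Z.
  rewrite [ri%:C * s * a]mulrAC [`|_ * s|]normrM exprMn (ger0_norm s0) s2 mulfVK ?gt_eqF // rmorphXn /=.
  rewrite ler_pXn2r ?nnegrE ?normr_ge0 ?ler0c ?ro0 //.
have [r [Hs Hd HP]] := det_bound _ _ M _ HC.
have H1 : (ri%:C) ^+ ny * `|\det M| <= (ro%:C) ^+ ny.
  rewrite Hd normr_prod -Hs -!prod_const_seq -big_split /=.
  rewrite [X in X <= _]big_seq [X in _ <= X]big_seq.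
  apply: ler_prod => z zr; apply/andP; split.
    rewrite mulr_ge0 // ler0c ltW //.
  by have := HP z zr; rewrite normrM normC_real (ger0_norm (ltW ri0)).
move: H1; rewrite /M det_mulmx det_inv !cmx_det normrM normfV !normC_real.
rewrite -!rmorphXn -fmorphV -!rmorphM lecR => H1.
have pos : 0 < `|\det Bo| by rewrite normr_gt0.
have -> : ri ^+ ny * `|\det Bi| = (ri ^+ ny * (`|\det Bo|^-1 * `|\det Bi|)) * `|\det Bo|.
  by field; rewrite gt_eqF.
by rewrite ler_wpM2r // ltW.
Qed.
Lemma kB_pow ny (B : 'M[R]_ny) : (0 < ny)%N ->
  0 <= powR (\det (B *m B^T)) (1 / (2 * ny%:R)) /\
  powR (\det (B *m B^T)) (1 / (2 * ny%:R)) ^+ ny = `|\det B|.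
Proof.
move=> hny.
have -> : \det (B *m B^T) = `|\det B| `^ 2%:R.
  by rewrite det_mulmx det_tr powR_mulrn // real_normK ?num_real // expr2.
split; first exact: powR_ge0.
rewrite -powR_mulrn ?powR_ge0 // -!powRrM.
have -> : 2 * (1 / (2 * ny%:R) * ny%:R) = 1 :> R.
  by field; rewrite pnatr_eq0 -lt0n.
by rewrite powRr1.
Qed.

Lemma final nx ny (hny : (0 < ny)%N) (Ao Ai : 'M[R]_(ny, nx)) (Bo Bi : 'M[R]_ny) (Co Ci : 'M[R]_nx) :
  Bo \in unitmx -> contains (inclusion Ao Bo Co) (inclusion Ai Bi Ci) ->
  cone_width Bi Ci <= cone_width Bo Co.
Proof.
move=> uBo Hcont.
pose rho (Cm : 'M[R]_nx) (j : 'I_nx) := Num.sqrt (\sum_k Cm k j ^+ 2).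
have rho_ge0 Cm j : 0 <= rho Cm j by apply: sqrtr_ge0.
have rho2 Cm j : rho Cm j ^+ 2 = \sum_k Cm k j ^+ 2.
  by rewrite sqr_sqrtr // sumr_ge0 // => k _; rewrite sqr_ge0.
have colx Cm j : \sum_k (Cm *m (delta_mx j 0 : 'cV[R]_nx)) k 0 ^+ 2 = rho Cm j ^+ 2.
  by rewrite rho2; apply: eq_bigr => k _; rewrite -colE mxE.
have Hj j : rho Ci j ^+ ny * `|\det Bi| <= rho Co j ^+ ny * `|\det Bo|.
  have [->|ri0] := eqVneq (rho Ci j) 0.
    by rewrite expr0n gtn_eqF // mul0r mulr_ge0 ?exprn_ge0.
  have ri0' : 0 < rho Ci j by rewrite lt_def ri0 rho_ge0.
  exact: (stepCD _ _ _ _ _ _ _ _ _ _ _ uBo Hcont ri0' (colx Ci j) (rho_ge0 Co j) (colx Co j)).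
have [ki0 kiP] := kB_pow _ Bi hny.
have [ko0 koP] := kB_pow _ Bo hny.
rewrite /cone_width.
set ki := powR _ _ in ki0 kiP *.
set ko := powR _ _ in ko0 koP *.
have Hj' j : ki * rho Ci j <= ko * rho Co j.
  rewrite -(ler_pXn2r hny) ?nnegrE ?mulr_ge0 // !exprMn kiP koP.
  by rewrite mulrC [X in _ <= X]mulrC.
have frobE (k : R) Cm : 0 <= k -> k * frob Cm = Num.sqrt (\sum_j (k * rho Cm j) ^+ 2).
  move=> k0; rewrite /frob exchange_big /=.
  under [in RHS]eq_bigr do rewrite exprMn rho2.
  by rewrite -mulr_sumr sqrtrM ?sqr_ge0 // sqrtr_sqr ger0_norm.
rewrite frobE // frobE // ler_sqrt; last by rewrite sumr_ge0 // => j _; rewrite sqr_ge0.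
apply: ler_sum => j _.
by rewrite ler_pXn2r ?nnegrE ?mulr_ge0.
Qed.

End C.

Theorem proposition3 (R : realType) (nx ny : nat) (hnx : (0 < nx)%N) (hny : (0 < ny)%N)
    (Ao Ai : 'M[R]_(ny, nx)) (Bo Bi : 'M[R]_ny) (Co Ci : 'M[R]_nx) :
  Bo \in unitmx -> Bi \in unitmx -> Co \in unitmx -> Ci \in unitmx ->
  contains (inclusion Ao Bo Co) (inclusion Ai Bi Ci) ->
  cone_width Bi Ci <= cone_width Bo Co.
Proof.
move=> uBo _ _ _ Hcont.
exact: (@final R nx ny hny Ao Ai Bo Bi Co Ci uBo Hcont).
Qed.
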